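(* Let $n\ge 3$, let $a<b<c$ be elements of $\mathcal{C}_n$ and let $k$ be an integer with $n-c\le k\le n-b-1$. Then the semiring $\mathcal{L}^{k}_{c}\left(\triangle^{(n)}\{a,b,c\}\right)=\{a_ib_{n-k-i}c_k:\ 0\le i\le n-k\}$ is isomorphic to the string $\mathcal{STR}^{(n-k)}\{a,b\}$.
   Context: For $N\ge1$, $\mathcal{C}_N=\{0,1,\dots,N-1\}$ with its usual order; $\widehat{\mathcal{E}}_{\mathcal{C}_N}$ is the set of all order-preserving maps $\mathcal{C}_N\to\mathcal{C}_N$ (not required to fix $0$), a semiring with $(\alpha+\beta)(x)=\max(\alpha(x),\beta(x))$ and $(\alpha\cdot\beta)(x)=\beta(\alpha(x))$. The notation $a_ib_\ell c_k$ (with $i+\ell+k=N$) denotes the map sending $0,\dots,i-1$ to $a$, the next $\ell$ elements to $b$ and the last $k$ to $c$. The triangle $\triangle^{(n)}\{a,b,c\}$ is the set of $\alpha\in\widehat{\mathcal{E}}_{\mathcal{C}_n}$ with image in $\{a,b,c\}$; its layer $\mathcal{L}^{k}_{c}$ is the set of elements mapping exactly $k$ elements to $c$ (a subsemiring for $n-c\le k\le n-b-1$). For $x<y$ in $\mathcal{C}_N$, the string $\mathcal{STR}^{(N)}\{x,y\}$ is the subsemiring of maps in $\widehat{\mathcal{E}}_{\mathcal{C}_N}$ with image in $\{x,y\}$. Isomorphism means semiring isomorphism. *)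

(* Defs.v *)
From mathcomp Require Import all_boot.
Unset Implicit Arguments.

Definition Emap (N : nat) := {ffun 'I_N -> 'I_N}.

Definition order_preserving (N : nat) (f : Emap N) : Prop :=
  forall x y : 'I_N, x <= y -> f x <= f y.
Arguments order_preserving {N} f.

Definition eadd (N : nat) (al be : Emap N) : Emap N :=
  [ffun x => if al x <= be x then be x else al x].
Arguments eadd {N} al be.

Definition emul (N : nat) (al be : Emap N) : Emap N :=
  [ffun x => be (al x)].
Arguments emul {N} al be.

Definition triangle (n a b c : nat) (f : Emap n) : Prop :=
  order_preserving f /\ forall x, (f x : nat) = a \/ (f x : nat) = b \/ (f x : nat) = c.

Definition layer (n c k : nat) (S : Emap n -> Prop) (f : Emap n) : Prop :=
  S f /\ #|[set x | (f x : nat) == c]| = k.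

Definition STR (N x y : nat) (f : Emap N) : Prop :=
  order_preserving f /\ forall z, (f z : nat) = x \/ (f z : nat) = y.

Definition is_abc (n a i b l c : nat) (f : Emap n) : Prop :=
  forall x : 'I_n, (f x : nat) = (if x < i then a else if x < i + l then b else c).

Definition semiring_iso (n m : nat) (S : Emap n -> Prop) (T : Emap m -> Prop)
    (phi : Emap n -> Emap m) : Prop :=
  (forall f, S f -> T (phi f)) /\
  (forall f g, S f -> S g -> phi f = phi g -> f = g) /\
  (forall h, T h -> exists f, S f /\ phi f = h) /\
  (forall f g, S f -> S g -> phi (eadd f g) = eadd (phi f) (phi g)) /\
  (forall f g, S f -> S g -> phi (emul f g) = emul (phi f) (phi g)).

Definition semiring_isomorphic (n m : nat) (S : Emap n -> Prop) (T : Emap m -> Prop) : Prop :=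
  exists phi, semiring_iso n m S T phi.

(* Main.v *)
Require Import Defs.
From mathcomp Require Import all_boot zify.
Lemma cardlt n m : m <= n -> #|[pred x : 'I_n | x < m]| = m.
Proof.
move=> hm.
rewrite cardE /enum_mem size_filter.
have -> : count [pred x : 'I_n | x < m] (Finite.enum 'I_n) = count (fun y => y < m) (map val (enum 'I_n)).
  by rewrite count_map enumT.
rewrite val_enum_ord -(subnKC hm) iotaD count_cat.
rewrite (eq_in_count (a2:= predT)); last by move=> y; rewrite mem_iota.
rewrite count_predT size_iota add0n.
rewrite (eq_in_count (a2:= pred0)); last by move=> y; rewrite mem_iota => /andP[h _]; rewrite /= ltnNge h.
by rewrite count_pred0 addn0.
Qed.
Lemma downset n (P : pred 'I_n) : (forall x y : 'I_n, x <= y -> P y -> P x) ->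
  forall x : 'I_n, P x = (x < #|P|).
Proof.
move=> hd x; apply/idP/idP => [Px|].
  have: [pred y : 'I_n | y < x.+1] \subset P.
    by apply/subsetP => y; rewrite inE /= => hy; apply: (hd y x) => //.
  by move/subset_leq_card; rewrite cardlt.
apply: contraLR => nPx; rewrite -leqNgt.
have: P \subset [pred y : 'I_n | y < x].
  apply/subsetP => y Py; rewrite inE /= ltnNge; apply/negP => hxy; by rewrite (hd x y hxy Py) in nPx.
by move/subset_leq_card; rewrite cardlt // ltnW.
Qed.

Definition gv (i m a b c t : nat) := if t < i then a else if t < m then b else c.

Lemma gv_mono i m a b c t u : i <= m -> a < b -> b < c -> t <= u -> gv i m a b c t <= gv i m a b c u.
Proof.
move=> *; rewrite /gv; case: (ltnP t i); case: (ltnP u i); case: (ltnP t m); case: (ltnP u m); lia.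
Qed.

Lemma char1 (n a b c k : nat) (f : Emap n) :
  a < b -> b < c -> c < n -> k <= n ->
  layer n c k (triangle n a b c) f <->
     exists i, i <= n - k /\ is_abc n a i b (n - k - i) c f.
Proof.
move=> ab bc cn kn; split.
- move=> [[op vals] hk].
  set A := [set x | (f x : nat) == c].
  have dC : forall x y : 'I_n, x <= y -> [predC A] y -> [predC A] x.
    move=> x y xy; rewrite !inE => /eqP hy; apply/eqP => hx.
    have := op x y xy; rewrite hx; case: (vals y) => [->|[->|//]]; lia.
  have cPc : #|[predC A]| = n - k by have := cardC A; rewrite card_ord hk; lia.
  have eC := downset _ _ dC; rewrite cPc in eC.
  set Pa := [pred x : 'I_n | (f x : nat) == a].
  have dA : forall x y : 'I_n, x <= y -> Pa y -> Pa x.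
    move=> x y xy; rewrite !inE /= => /eqP hy; apply/eqP.
    have := op x y xy; rewrite hy; case: (vals x) => [->|[->|->]]; lia.
  have eA := downset _ _ dA.
  exists #|Pa|; split.
    rewrite -cPc; apply: subset_leq_card; apply/subsetP => x; rewrite !inE /= => /eqP ->; lia.
  move=> x.
  have hA := eA x; have hC := eC x; rewrite !inE /= in hA hC.
  case: ifP => h1; first by apply/eqP; rewrite hA.
  have -> : #|Pa| + (n - k - #|Pa|) = n - k.
    rewrite subnKC //; rewrite -cPc; apply: subset_leq_card; apply/subsetP => y; rewrite !inE /= => /eqP ->; lia.
  case: ifP => h2.
    case: (vals x) => [|[//|]] e; [by move: hA; rewrite e eqxx h1 | by move: hC; rewrite e eqxx h2].
  by apply/eqP; move: hC; rewrite h2; case: eqP.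
- move=> [i [hi habc]].
  have hf : forall x : 'I_n, (f x : nat) = gv i (n - k) a b c x.
    by move=> x; rewrite habc /gv subnKC.
  split; first split.
  + move=> x y xy; rewrite !hf; exact: gv_mono.
  + by move=> x; rewrite hf /gv; case: ifP; [left|case: ifP; [right;left|right;right]].
  have -> : #|[set x | (f x : nat) == c]| = #|[predC [pred x : 'I_n | x < n - k]]|.
    apply: eq_card => x; rewrite !inE hf /gv.
    case: (ltnP x i) => h1.
      have -> : x < n - k by lia.
      by apply/negbTE/eqP; lia.
    case: (ltnP x (n-k)) => h2 /=; last by rewrite eqxx.
    by apply/negbTE/eqP; lia.
  have := cardC [pred x : 'I_n | x < n - k]; rewrite card_ord cardlt ?leq_subr //.
  move=> h; apply/eqP; rewrite -(eqn_add2l (n-k)) h; apply/eqP; lia.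
Qed.

Definition phi (n k : nat) (f : Emap n) : Emap (n - k) :=
  [ffun x : 'I_(n - k) => insubd x (nat_of_ord (f (widen_ord (leq_subr k n) x)))].

Lemma layer_vals (n a b c k : nat) (f : Emap n) :
  a < b -> b < c -> c < n -> k <= n ->
  layer n c k (triangle n a b c) f ->
  forall x : 'I_n, (x < n - k -> (f x : nat) = a \/ (f x : nat) = b) /\
                   (n - k <= x -> (f x : nat) = c).
Proof.
move=> ab bc cn kn /(char1 _ _ _ _ _ _ ab bc cn kn) [i [hi habc]] x.
rewrite habc subnKC //; split.
  by move=> h; rewrite h; case: ifP; [left|right].
by move=> h; case: ifP => ?; [lia|case: ifP => ?; [lia|by []]].
Qed.

Theorem proposition30 (n a b c k : nat) :
  3 <= n -> a < b -> b < c -> c < n ->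
  n - c <= k -> k <= n - b - 1 ->
  (forall f : Emap n,
     layer n c k (triangle n a b c) f <->
     exists i, i <= n - k /\ is_abc n a i b (n - k - i) c f) /\
  semiring_isomorphic n (n - k) (layer n c k (triangle n a b c)) (STR (n - k) a b).
Proof.
move=> n3 ab bc cn hk1 hk2.
have kn : k <= n by lia.
have bm : b < n - k by lia.
split; first by move=> f; apply: char1.
set L := layer n c k (triangle n a b c).
have LV := layer_vals n a b c k _ ab bc cn kn.
set w := widen_ord (leq_subr k n).
have small : forall f, L f -> forall x : 'I_(n - k), (f (w x) : nat) < n - k.
  move=> f Lf x; have [h _] := LV f Lf (w x); case: (h (ltn_ord x)) => ->; lia.
have pv : forall f, L f -> forall x : 'I_(n - k), (phi n k f x : nat) = f (w x).
  by move=> f Lf x; rewrite ffunE val_insubd small.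
exists (phi n k); split; [|split; [|split; [|split]]].
- move=> f Lf; have [[op _] _] := Lf; split.
    by move=> x y xy; rewrite !pv //; apply: op.
  by move=> z; rewrite pv //; have [h _] := LV f Lf (w z); exact: (h (ltn_ord z)).
- move=> f g Lf Lg e; apply/ffunP => x; apply: val_inj.
  case: (ltnP x (n - k)) => hx.
    have -> : x = w (Ordinal hx) by apply: val_inj.
    change (nat_of_ord (f (w (Ordinal hx))) = nat_of_ord (g (w (Ordinal hx)))).
    by rewrite -(pv f Lf) -(pv g Lg) e.
  have [_ h1] := LV f Lf x; have [_ h2] := LV g Lg x.
  by change (nat_of_ord (f x) = nat_of_ord (g x)); rewrite h1 // h2.
- move=> h [op hv].
  set Pa := [pred x : 'I_(n - k) | (h x : nat) == a].
  have dA : forall x y : 'I_(n - k), x <= y -> Pa y -> Pa x.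
    move=> x y xy; rewrite !inE /= => /eqP hy; apply/eqP.
    have := op x y xy; rewrite hy; case: (hv x) => [->|->]; lia.
  have eA := downset _ _ dA.
  have iP : #|Pa| <= n - k by rewrite -[X in _ <= X]card_ord max_card.
  set f : Emap n := [ffun x : 'I_n => insubd x (gv #|Pa| (n - k) a b c x)].
  have fv : forall x : 'I_n, (f x : nat) = gv #|Pa| (n - k) a b c x.
    move=> x; have hg : gv #|Pa| (n - k) a b c x < n.
      by rewrite /gv; case: ifP => _; [|case: ifP => _]; lia.
    by rewrite ffunE val_insubd hg.
  have Lf : L f.
    apply/(char1 _ _ _ _ _ _ ab bc cn kn); exists #|Pa|; split => // x.
    by rewrite fv /gv subnKC.
  exists f; split => //.
  apply/ffunP => x; apply: val_inj => /=; rewrite pv // fv /gv /= ltn_ord.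
  have := eA x; rewrite inE /= => <-.
  by case: (hv x) => ->; case: eqP => // ?; lia.
- move=> f g Lf Lg; apply/ffunP => x; apply: val_inj.
  change (nat_of_ord (phi n k (eadd f g) x) = nat_of_ord (eadd (phi n k f) (phi n k g) x)).
  have sf := small f Lf x.
  have sg := small g Lg x.
  have E : forall P Q : 'I_n, (\val P <= \val Q) = (P <= Q) := fun _ _ => erefl.
  rewrite /eadd /phi !ffunE -/w !val_insubd.
  rewrite sf sg.
  by case: (leqP (f (w x)) (g (w x))) => h; rewrite ?sf ?sg val_insubd ?sf ?sg.
- move=> f g Lf Lg; apply/ffunP => x; apply: val_inj.
  change (nat_of_ord (phi n k (emul f g) x) = nat_of_ord (emul (phi n k f) (phi n k g) x)).
  have sf := small f Lf x.
  have e' : w (insubd x (nat_of_ord (f (w x)))) = f (w x).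
    by apply: val_inj; rewrite /= val_insubd sf.
  have sgf : g (f (w x)) < n - k.
    have [h _] := LV g Lg (f (w x)); case: (h sf) => ->; lia.
  rewrite /emul /phi !ffunE -/w e' !val_insubd sgf.
  by [].
Qed.
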